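(* Fix integers $c\ge2$, $k\ge2$. Let $P$ be the RAM program that, on a dataset $x$ with $n=|x|$, performs independent biased coin flips where flip number $i+1$ ($i=0,1,2,\dots$) succeeds with probability $\frac{1}{(\max\{n-i,0\}+k)^c}$, stops at the first success, and outputs the number $\hat y$ of unsuccessful flips preceding it. Then $$\Pr\Big[\hat y<\frac n2\Big]\le O\!\left(\frac{1}{n^{c-1}}\right).$$
   Context: $n=|x|$ is the number of records in the input dataset, which the RAM program can read directly. *)

(* Defs.v *)
From HB Require Import structures.
From mathcomp Require Import all_boot all_order all_algebra.
Set Implicit Arguments. Unset Strict Implicit. Unset Printing Implicit Defensive.
Import Order.TTheory GRing.Theory Num.Theory.
Local Open Scope ring_scope.

(* Success probability of flip number i+1 (i = 0,1,2,...) on a dataset of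
   size n: 1 / (max(n - i, 0) + k)^c.  Truncated nat subtraction (n - i)%N
   is exactly max(n - i, 0). *)
Definition flip_prob (R : realFieldType) (c k n i : nat) : R :=
  1 / (((n - i)%N + k)%:R ^+ c).

(* Output distribution of P: Pr[yhat = j] = (prod_{i<j} (1 - p_i)) * p_j,
   the probability that the first j flips fail and flip j+1 succeeds. *)
Definition yhat_pmf (R : realFieldType) (c k n j : nat) : R :=
  (\prod_(i < j) (1 - flip_prob R c k n i)) * flip_prob R c k n j.

Definition prob_yhat_lt_half (R : realFieldType) (c k n : nat) : R :=
  \sum_(j < n | (2 * j < n)%N) yhat_pmf R c k n j.

(* Main.v *)
Require Import Defs.
From HB Require Import structures.
From mathcomp Require Import all_boot all_order all_algebra.
From mathcomp Require Import zify ring lra.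
Import Order.TTheory GRing.Theory Num.Theory.
Local Open Scope ring_scope.

Lemma flip_prob_01 (R : realFieldType) c k n i : (0 < k)%N ->
  0 <= flip_prob R c k n i <= 1.
Proof.
move=> k0; rewrite /flip_prob.
have hm : 0 < ((n - i)%N + k)%:R ^+ c :> R.
  by rewrite exprn_gt0 // ltr0n; lia.
apply/andP; split; first by rewrite divr_ge0 // ltW.
rewrite ler_pdivrMr // mul1r -natrX ler1n expn_gt0; apply/orP; left; lia.
Qed.

Lemma flip_prob_le (R : realFieldType) c k n j : (0 < k)%N -> (0 < n)%N ->
  (2 * j < n)%N -> flip_prob R c k n j <= (2 ^ c)%:R / n%:R ^+ c.
Proof.
move=> k0 n0 hj; rewrite /flip_prob.
have hm : 0 < ((n - j)%N + k)%:R ^+ c :> R.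
  by rewrite exprn_gt0 // ltr0n; lia.
have hn : 0 < n%:R ^+ c :> R by rewrite exprn_gt0 // ltr0n.
rewrite ler_pdivrMr // mulrAC ler_pdivlMr // mul1r -!natrX -natrM ler_nat.
case: c {hm hn} => [|c]; first by rewrite !expn0.
rewrite -expnMn leq_exp2r //; lia.
Qed.

Theorem mainTheorem9 (R : realFieldType) (c k : nat) :
  (2 <= c)%N -> (2 <= k)%N ->
  exists C : R, exists N : nat, forall n : nat, (N <= n)%N ->
    prob_yhat_lt_half R c k n <= C / (n%:R ^+ (c - 1)).
Proof.
move=> hc hk; exists (2 ^ c)%:R, 1%N => n n1.
have k0 : (0 < k)%N by lia.
set a : R := (2 ^ c)%:R / n%:R ^+ c.
have step : prob_yhat_lt_half R c k n <= \sum_(j < n) a.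
  rewrite /prob_yhat_lt_half big_mkcond; apply: ler_sum => j _.
  case: ifP => hj; last by rewrite divr_ge0 // exprn_ge0.
  rewrite /yhat_pmf; apply: le_trans (flip_prob_le R c k n j k0 n1 hj).
  case/andP: (flip_prob_01 R c k n j k0) => h0 _.
  apply: ler_piMl => //; apply: prodr_ile1 => i _.
  case/andP: (flip_prob_01 R c k n i k0) => h2 h1; apply/andP; split; lra.
apply: le_trans step _; rewrite sumr_const card_ord /a -mulr_natl mulr1.
move: ((2 ^ c)%:R : R) => t.
have [c' ->] : exists c', c = c'.+2 by exists (c - 2)%N; lia.
rewrite subn1 /= exprS.
have hn : n%:R != 0 :> R by rewrite pnatr_eq0; lia.
have hn' : n%:R ^+ c'.+1 != 0 :> R by rewrite expf_neq0.
rewrite le_eqVlt; apply/orP; left; apply/eqP; field.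
by rewrite hn hn'.
Qed.
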